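(* Let $G$ and $H$ be connected graphs, each with at least $2$ vertices. The direct product $G\times H$ is $1$-perfectly orientable if and only if one of the following holds: (i) $G\cong K_2$ and $H$ is a pseudotree, or vice versa; (ii) $G\cong P_3$ and $H\cong P_4$, or vice versa; (iii) $G\cong H\cong P_3$.
   Context: All graphs are finite and simple. An orientation of a graph $G$ is $1$-perfect if the out-neighborhood of every vertex induces a clique in $G$; $G$ is $1$-perfectly orientable if it admits a $1$-perfect orientation. The direct product $G\times H$ has vertex set $V(G)\times V(H)$, with $(u,v),(u',v')$ adjacent iff $uu'\in E(G)$ and $vv'\in E(H)$. A pseudotree is a connected graph containing at most one cycle. $P_n$ denotes the path on $n$ vertices. *)

(* Defs.v *)
From mathcomp Require Import all_boot.
Set Implicit Arguments. Unset Strict Implicit. Unset Printing Implicit Defensive.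

Definition simple_graph (T : finType) (e : rel T) : Prop :=
  symmetric e /\ irreflexive e.

Definition connected_graph (T : finType) (e : rel T) : Prop :=
  forall x y : T, connect e x y.

Definition graph_iso (T1 T2 : finType) (e1 : rel T1) (e2 : rel T2) : Prop :=
  exists f : T1 -> T2, bijective f /\ forall u v, e2 (f u) (f v) = e1 u v.

(* The path P_n on vertex set {0,...,n-1}; K_2 = P_2. *)
Definition path_graph (n : nat) : rel 'I_n :=
  fun i j => (i.+1 == j :> nat) || (j.+1 == i :> nat).

Arguments path_graph n : clear implicits.

Definition direct_prod (T1 T2 : finType) (e1 : rel T1) (e2 : rel T2)
  : rel (T1 * T2) :=
  fun x y => e1 x.1 y.1 && e2 x.2 y.2.

Definition is_cycle (T : finType) (e : rel T) (s : seq T) : bool :=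
  [&& uniq s, 2 < size s & cycle e s].

(* Edge set of the cycle subgraph determined by s. Two cycle sequences
   give the same cycle (subgraph) iff their edge relations coincide. *)
Definition cycle_edge (T : finType) (s : seq T) (u v : T) : bool :=
  (u \in s) && ((next s u == v) || (prev s u == v)).

(* Pseudotree: connected graph containing at most one cycle. *)
Definition pseudotree (T : finType) (e : rel T) : Prop :=
  connected_graph e /\
  forall s1 s2 : seq T, is_cycle e s1 -> is_cycle e s2 ->
    forall u v, cycle_edge s1 u v = cycle_edge s2 u v.

Definition orientation (T : finType) (e : rel T) (o : rel T) : Prop :=
  (forall u v, o u v -> e u v) /\
  (forall u v, e u v -> o u v != o v u).

Definition one_perfect (T : finType) (e : rel T) (o : rel T) : Prop :=
  orientation e o /\
  forall v x y, o v x -> o v y -> x != y -> e x y.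

Definition one_perfectly_orientable (T : finType) (e : rel T) : Prop :=
  exists o : rel T, one_perfect e o.

(* Main.v *)
Require Import Defs.
From mathcomp Require Import all_boot.
From mathcomp Require Import zify.
From Stdlib Require Import Classical_Prop.

Set Implicit Arguments. Unset Strict Implicit. Unset Printing Implicit Defensive.

Section Count.
Variable T : finType.
Variable e : rel T.
Hypothesis esym : symmetric e.
Hypothesis eirr : irreflexive e.

Definition arcs (S : {set T}) : {set T * T} :=
  [set p | (p.1 \in S) && (p.2 \in S) && e p.1 p.2].
Definition PP S := #|arcs S|.

Lemma growN (S : {set T}) w : w \notin S ->
  PP S + 2 * #|[set z in S | e w z]| <= PP (w |: S).
Proof.
move=> wS; set N := [set z in S | e w z].
set B := [set (w, z) | z in N]; set C := [set (z, w) | z in N].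
have cB : #|B| = #|N| by apply: card_imset => x y [].
have cC : #|C| = #|N| by apply: card_imset => x y [].
have dAB : arcs S :&: B = set0.
  apply/setP=> p; rewrite !inE; apply/negbTE; apply/andP => -[/andP[/andP[h1 _] _]].
  by case/imsetP=> z _ Hp; rewrite Hp /= in h1; rewrite h1 in wS.
have dABC : (arcs S :|: B) :&: C = set0.
  apply/setP=> p; rewrite !inE; apply/negbTE; apply/andP => -[/orP[]].
    by case/andP=> /andP[_ h2] _ /imsetP[z _ Hp]; rewrite Hp /= in h2; rewrite h2 in wS.
  case/imsetP=> z zN -> /imsetP[z' z'N [e1 e2]].
  by move: zN; rewrite e2 inE (negbTE wS).
have -> : PP S + 2 * #|N| = #|arcs S :|: B :|: C|.
  by rewrite cardsU dABC cards0 subn0 cardsU dAB cards0 subn0 cB cC /PP mul2n -addnn addnA.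
apply: subset_leq_card; apply/subsetP => p; rewrite !inE => /orP[/orP[|]|].
- by case/andP=> /andP[-> ->] ->; rewrite !orbT.
- by case/imsetP=> z; rewrite inE => /andP[zS ewz] ->; rewrite /= eqxx zS ewz orbT.
- by case/imsetP=> z; rewrite inE => /andP[zS ewz] ->; rewrite /= eqxx zS esym ewz orbT.
Qed.

Lemma step1 (S : {set T}) w z k : w \notin S -> z \in S -> e w z ->
  2 * #|S| <= PP S + k -> 2 * #|w |: S| <= PP (w |: S) + k.
Proof.
move=> wS zS ewz H; have := growN wS; rewrite cardsU1 wS.
have : 0 < #|[set z in S | e w z]| by apply/card_gt0P; exists z; rewrite inE zS.
lia.
Qed.

Lemma step2 (S : {set T}) w a b k : w \notin S -> a \in S -> b \in S -> a != b ->
  e w a -> e w b ->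
  2 * #|S| <= PP S + k -> 2 * #|w |: S| + 2 <= PP (w |: S) + k.
Proof.
move=> wS aS bS ab ewa ewb H; have := growN wS; rewrite cardsU1 wS.
have : 2 <= #|[set z in S | e w z]|.
  have c2 : #|[set a; b]| = 2 by rewrite cards2 ab.
  rewrite -{1}c2; apply: subset_leq_card.
  by apply/subsetP=> x; rewrite !inE => /orP[]/eqP->; rewrite ?aS ?bS ?ewa ?ewb.
lia.
Qed.

Lemma grow_path l z (S : {set T}) k : z \in S -> path e z l ->
  2 * #|S| <= PP S + k ->
  2 * #|S :|: [set x in l]| <= PP (S :|: [set x in l]) + k.
Proof.
elim: l z S => [|y l IH] z S zS /=.
  by move=> _; have -> : S :|: [set x in [::]] = S by apply/setP=> x; rewrite !inE orbF.
case/andP=> ezy pl H.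
have -> : S :|: [set x in y :: l] = (y |: S) :|: [set x in l].
  by apply/setP=> x; rewrite !inE; case: (x == y); rewrite ?orbT.
apply: (IH y); first by rewrite !inE eqxx.
  by [].
case yS: (y \in S).
  by have -> : y |: S = S by apply/setP=> x; rewrite !inE; case: eqP => // ->.
by apply: (step1 (z := z)); rewrite ?yS // esym.
Qed.

Lemma PP1 x : PP [set x] = 0.
Proof.
apply/eqP; rewrite cards_eq0; apply/eqP/setP=> p; rewrite !inE.
by apply/negbTE/negP; case/andP=> /andP[/eqP-> /eqP->]; rewrite eirr.
Qed.


Lemma rot_cyc (s : seq T) x : is_cycle e s -> x \in s -> exists r,
  [/\ is_cycle e (x :: r), s =i x :: r, next s =1 next (x :: r) & prev s =1 prev (x :: r)].
Proof.
case/and3P=> us ss cs xs; case: (rot_to xs) => i r Hr; exists r; rewrite -Hr; split.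
- by rewrite /is_cycle rot_uniq size_rot rot_cycle us ss cs.
- by move=> y; rewrite mem_rot.
- by move=> y; rewrite next_rot.
- by move=> y; rewrite prev_rot.
Qed.

Lemma next_head (x : T) r : next (x :: r) x = head x r.
Proof. by rewrite next_nth mem_head /= eqxx nth0. Qed.

Lemma prev_head (x : T) r : x \notin r -> prev (x :: r) x = last x r.
Proof.
move=> xr; rewrite prev_nth mem_head memNindex //.
by rewrite -[size r]/((size (x :: r)).-1) nth_last.
Qed.

Lemma last_neq (x : T) r : x \notin r -> 0 < size r -> last x r != x.
Proof.
case: r => [|c r''] //= ; rewrite inE negb_or => /andP[xc xr''] _.
by apply/negP=> /eqP Hl; move: (mem_last c r''); rewrite Hl inE (negbTE xc) (negbTE xr'').
Qed.

Lemma cycle_base (s : seq T) : is_cycle e s -> 2 * #|[set y in s]| <= PP [set y in s].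
Proof.
case: s => [|x r] /and3P[us ss cs] //.
case/lastP: r us ss cs => [|r' q] //.
rewrite /= !rcons_path last_rcons rcons_uniq mem_rcons inE negb_or size_rcons.
case/and3P=> /andP[xq xr'] qr' _ ss /andP[/andP[pr' elq] eqx].
have H0 : 2 * #|[set x]| <= PP [set x] + 2 by rewrite cards1 PP1.
have H1 := grow_path (set11 x) pr' H0.
set S1 := _ :|: _ in H1.
have qS1 : q \notin S1 by rewrite !inE negb_or eq_sym xq qr'.
have lS1 : last x r' \in S1.
  by move: (mem_last x r'); rewrite !inE; case/orP=> ->; rewrite ?orbT.
have xS1 : x \in S1 by rewrite !inE eqxx.
have lx : last x r' != x by apply: last_neq => //; lia.
have eql : e q (last x r') by rewrite esym.
have := step2 qS1 lS1 xS1 lx eql eqx H1.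
have -> : q |: S1 = [set y in x :: rcons r' q].
  by apply/setP=> y; rewrite !inE mem_rcons inE; case: (y == q); case: (y == x); rewrite ?orbT ?orbF.
by rewrite leq_add2r.
Qed.

Lemma split_last_notin (S : {set T}) (r : seq T) : has (fun y => y \notin S) r ->
  exists a w b, [/\ r = a ++ w :: b, w \notin S & all (fun y => y \in S) b].
Proof.
elim/last_ind: r => [|r z IH] //=; rewrite has_rcons.
case zS: (z \in S) => /= H.
  case: (IH H) => a [w [b [-> wS ab]]]; exists a, w, (rcons b z).
  by rewrite rcons_cat rcons_cons all_rcons zS ab.
by exists r, z, [::]; split; rewrite ?cats1 ?zS.
Qed.

Lemma ends_neq (x w : T) a b : uniq (x :: a ++ w :: b) -> 2 < size (x :: a ++ w :: b) ->
  last x a != head w (rcons b x).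
Proof.
case: a => [|c a'] /=.
  case: b => [|d b'] //= /andP[xn _] _; apply/eqP => xd.
  by rewrite xd !inE eqxx !orbT in xn.
move=> /andP[xn u] _; have : uniq ((c :: a') ++ w :: b) by []. 
rewrite cat_uniq => /and3P[_ hn _]; clear u.
case: b xn hn => [|d b'] /= xn hn.
  apply/eqP => Hl; move: (mem_last c a'); rewrite Hl => xin.
  by move: xn; rewrite -cat_cons mem_cat xin.
apply/eqP => Hl; move: (mem_last c a'); rewrite Hl => din.
by move: hn; rewrite /= din !orbT.
Qed.

Lemma path_head_e (w : T) b x : path e w (rcons b x) -> e w (head w (rcons b x)).
Proof. by case: b => [|c b] /= /andP[]. Qed.

Lemma ear (S : {set T}) t x y : 2 * #|S| <= PP S -> is_cycle e t -> x \in t -> x \in S ->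
  y \in t -> y \notin S -> exists S' : {set T}, 2 * #|S'| < PP S'.
Proof.
move=> HS ct xt xS yt yS.
case: (rot_cyc ct xt) => r [ct' mt _ _].
have hr : has (fun y => y \notin S) r.
  apply/hasP; exists y => //.
  have : y \in x :: r by rewrite -mt.
  by rewrite inE; case/orP => // /eqP Hy; rewrite Hy xS in yS.
case: (split_last_notin hr) => a [w [b [Hr wS allb]]]; subst r.
move: ct' => /and3P[ut st cyt].
move: (cyt); rewrite /= rcons_cat rcons_cons cat_path /= => /andP[pa /andP[ew pb]].
have ewz2 := path_head_e pb.
have z2S : head w (rcons b x) \in S.
  by move: allb; case: (b) => [|c b'] //= /andP[].
have HS0 : 2 * #|S| <= PP S + 0 by rewrite addn0.
have H1 := grow_path xS pa HS0.
set S1 := _ :|: _ in H1.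
have wS1 : w \notin S1.
  rewrite !inE negb_or wS /=; move: ut; rewrite /= cat_uniq => /andP[_ /and3P[_ /norP[] ]].
  by [].
have z1S1 : last x a \in S1.
  by move: (mem_last x a); rewrite !inE; case/orP=> [/eqP->|->]; rewrite ?xS ?orbT.
have z2S1 : head w (rcons b x) \in S1 by rewrite !inE z2S.
have ew1 : e w (last x a) by rewrite esym.
have := step2 wS1 z1S1 z2S1 (ends_neq ut st) ew1 ewz2 H1.
rewrite addn0 => H; exists (w |: S1); apply: leq_trans H; rewrite addn2; exact: leqnSn.
Qed.
Lemma uniq_mid (a b : seq T) x : uniq (a ++ x :: b) -> (x \notin a) && (x \notin b).
Proof. by rewrite cat_uniq /= => /and3P[_ /norP[-> _] /andP[-> _]]. Qed.

Lemma chord s u v : is_cycle e s -> u \in s -> v \in s -> e u v -> u != v ->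
  next s u != v -> prev s u != v -> exists S' : {set T}, 2 * #|S'| < PP S'.
Proof.
move=> cs us vs euv uv.
case: (rot_cyc cs us) => r [cr mr -> ->].
have ur : u \notin r by case/and3P: cr => /= /andP[].
rewrite next_head prev_head //.
have vr : v \in r by move: vs; rewrite mr inE eq_sym (negbTE uv).
move: cr ur; case/splitPr: vr => r1 r2 cr ur hn hp.
case: r1 cr ur hn hp => [|c r1'] cr ur hn hp; first by rewrite /= eqxx in hn.
case/lastP: r2 cr ur hp hn => [|r2' q] cr ur hp hn; first by rewrite last_cat /= eqxx in hp.
set R1 := c :: r1' in cr ur hn.
case/and3P: cr => ucr scr ccr.
move: ccr; rewrite /= -/R1 rcons_cat rcons_cons cat_path /= !rcons_path last_rcons.
case/and5P=> euc pr1 elv' /andP[pr2 elq] equ.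
have pR1 : path e u R1 by rewrite /= euc.
have elv : e (last u R1) v by [].
have H0 : 2 * #|[set u]| <= PP [set u] + 2 by rewrite cards1 PP1.
have H1 := grow_path (set11 u) pR1 H0.
set S1 := _ :|: _ in H1.
have uR1 : u \notin R1 by move: ur; rewrite mem_cat negb_or => /andP[].
have vR1 : v \notin R1.
  by move: ucr; rewrite -cat_cons => /uniq_mid /andP[]; rewrite inE negb_or => /andP[].
have vS1 : v \notin S1 by rewrite !inE negb_or eq_sym uv.
have lS1 : last u R1 \in S1.
  by move: (mem_last u R1); rewrite !inE; case/orP=> ->; rewrite ?orbT.
have uS1 : u \in S1 by rewrite !inE eqxx.
have lu : last u R1 != u by apply: last_neq.
have evl : e v (last u R1) by rewrite esym.
have evu : e v u by rewrite esym.
have := step2 vS1 lS1 uS1 lu evl evu H1.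
rewrite leq_add2r -(addn0 (PP _)) => H2.
set S2 := v |: S1 in H2.
have vS2 : v \in S2 by rewrite !inE eqxx.
have H3 := grow_path vS2 pr2 H2.
set S3 := _ :|: _ in H3.
have uq : uniq (rcons (u :: R1 ++ v :: r2') q) by rewrite rcons_cons rcons_cat rcons_cons.
move: uq; rewrite rcons_uniq => /andP[qn uq].
have qS3 : q \notin S3.
  move: qn; rewrite !inE mem_cat inE !negb_or.
  by case/and5P=> -> -> -> -> ->.
have l3 : last v r2' \in S3.
  by move: (mem_last v r2'); rewrite !inE; case/orP=> ->; rewrite ?orbT.
have u3 : u \in S3 by rewrite !inE eqxx !orbT.
have lu3 : last v r2' != u.
  apply/negP=> /eqP Hl; move: (mem_last v r2'); rewrite Hl inE.
  rewrite (negbTE uv) /=.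
  by move=> H; move: ur; rewrite mem_cat inE mem_rcons inE H !orbT.
have eql : e q (last v r2') by rewrite esym.
have := step2 qS3 l3 u3 lu3 eql equ H3.
rewrite addn0 => H; exists (q |: S3); apply: leq_trans H; rewrite addn2; exact: leqnSn.
Qed.

Lemma reach (S : {set T}) (A : pred T) x p : 2 * #|S| <= PP S ->
  (forall a, A a -> a \notin S) -> x \in S -> path e x p -> A (last x p) ->
  exists (S1 : {set T}) z w, [/\ 2 * #|S1| <= PP S1, z \in S1, w \notin S1, A w & e z w].
Proof.
elim: p x S => [|y p IH] x S HS HA xS /=.
  by move=> _ Ax; have := HA x Ax; rewrite xS.
case/andP=> exy pp Al.
case Ay: (A y); first by exists S, x, y; split => //; apply: HA.
have HS' : 2 * #|y |: S| <= PP (y |: S).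
  case yS: (y \in S).
    by have -> : y |: S = S by apply/setP=> z; rewrite !inE; case: eqP => // ->.
  have eyx : e y x by rewrite esym.
  rewrite -(addn0 (PP _)); apply: (step1 (z := x)); rewrite ?yS ?addn0 //.
have HA' : forall a, A a -> a \notin y |: S.
  move=> a Aa; rewrite !inE negb_or HA // andbT.
  by apply/eqP=> Hay; rewrite Hay Ay in Aa.
exact: (IH y (y |: S) HS' HA' (setU11 y S) pp Al).
Qed.

Lemma cycle_nbrs t w : is_cycle e t -> w \in t ->
  [/\ next t w != w, prev t w != w & next t w != prev t w].
Proof.
move=> ct wt; case: (rot_cyc ct wt) => r [cr _ -> ->].
have /andP[wr ur] : (w \notin r) && uniq r by case/and3P: cr.
have sr : 2 < size (w :: r) by case/and3P: cr.
rewrite next_head prev_head //.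
clear cr; case: r wr ur sr => [|c r''] //= wr ur sr.
rewrite inE negb_or in wr; case/andP: wr => wc wr''.
have cr'' : c \notin r'' by case/andP: ur.
have lc : last c r'' != c by apply: last_neq => //; rewrite ltnS in sr; exact: sr.
split; first by rewrite eq_sym.
  apply/negP=> /eqP Hl; move: (mem_last c r''); rewrite Hl inE.
  by rewrite (negbTE wc) (negbTE wr'').
by rewrite eq_sym.
Qed.

Lemma cyc_edge_sub (sparse : forall S, PP S <= 2 * #|S|)
  (conn : forall x y, connect e x y) s t u v :
  is_cycle e s -> is_cycle e t -> cycle_edge t u v -> cycle_edge s u v.
Proof.
move=> cs ct; rewrite /cycle_edge => /andP[ut Huv].
have vt : v \in t by case/orP: Huv => /eqP <-; rewrite ?mem_next ?mem_prev.
have euv : e u v.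
  case/orP: Huv => /eqP <-; first by apply: next_cycle ut; case/and3P: ct.
  by rewrite esym; apply: prev_cycle ut; case/and3P: ct.
have uv : u != v by apply/negP=> /eqP E; rewrite E eirr in euv.
apply/negPn/negP => ncs.
suff [S' HS'] : exists S' : {set T}, 2 * #|S'| < PP S'.
  by have := sparse S'; rewrite leqNgt HS'.
case: (boolP ((u \in s) && (v \in s))) => [/andP[us vs]|nin].
  apply: (chord cs us vs euv uv).
    by apply/negP=> H; move: ncs; rewrite us H.
  by apply/negP=> H; move: ncs; rewrite us H orbT.
have [y yt ys] : exists2 y, y \in t & y \notin s.
  by case/nandP: nin => H; [exists u | exists v].
case: (boolP [exists x, (x \in t) && (x \in s)]) => [/existsP[x /andP[xt xs]] | /existsPn dis].
  by apply: (ear (S := [set z in s]) (cycle_base cs) ct xt _ yt); rewrite inE.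
case: s cs {ncs nin ys} dis => [|x0 s'] cs dis; first by case/and3P: cs.
have := conn x0 y => /connectP[p pp Hl].
have HS := cycle_base cs.
have HA : forall a, (fun a => a \in t) a -> a \notin [set z in x0 :: s'].
  by move=> a at'; rewrite inE; have := dis a; rewrite at'.
have x0S : x0 \in [set z in x0 :: s'] by rewrite inE mem_head.
have := reach HS HA x0S pp; rewrite -Hl => /(_ yt) [S1 [z [w [H1 zS1 wS1 wt ezw]]]].
have ewz : e w z by rewrite esym.
have H1' : 2 * #|S1| <= PP S1 + 0 by rewrite addn0.
have := step1 wS1 zS1 ewz H1'; rewrite addn0 => H2.
case: (boolP [exists y, (y \in t) && (y \notin w |: S1)]) => [/existsP[y' /andP[y't y'S2]] | /existsPn alli].
  by apply: (ear H2 ct wt _ y't y'S2); rewrite !inE eqxx.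
case: (cycle_nbrs ct wt) => nw pw np.
have inS1 : forall a, a \in t -> a != w -> a \in S1.
  move=> a at' aw; have := alli a; rewrite at' /= negbK !inE.
  by rewrite (negbTE aw).
have nS1 : next t w \in S1 by apply: inS1; rewrite ?mem_next.
have pS1 : prev t w \in S1 by apply: inS1; rewrite ?mem_prev.
have ewn : e w (next t w) by apply: next_cycle wt; case/and3P: ct.
have ewp : e w (prev t w) by rewrite esym; apply: prev_cycle wt; case/and3P: ct.
have := step2 wS1 nS1 pS1 np ewn ewp H1'.
rewrite addn0 => H; exists (w |: S1); apply: leq_trans H; rewrite addn2; exact: leqnSn.
Qed.

Lemma sparse_pseudotree (sparse : forall S, PP S <= 2 * #|S|)
  (conn : forall x y, connect e x y) : pseudotree e.
Proof.
split => // s1 s2 c1 c2 u v.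
by apply/idP/idP; apply: cyc_edge_sub.
Qed.

End Count.

Set Implicit Arguments. Unset Strict Implicit. Unset Printing Implicit Defensive.

Definition trifree (T : finType) (e : rel T) (S : {set T}) : Prop :=
  forall a b c, a \in S -> b \in S -> c \in S -> e a b -> e b c -> e a c -> False.

Lemma key (D : finType) (e o : rel D) : one_perfect e o -> forall W : {set D},
  trifree e W -> PP e W <= 2 * #|W|.
Proof.
case=> [[oe ori] op] W tf.
pose f (p : D * D) := if o p.1 p.2 then (p.1, true) else (p.2, false).
have inj : {in arcs e W &, injective f}.
  move=> [p1 p2] [q1 q2]; rewrite !inE /= => /andP[/andP[p1W p2W] ep] /andP[/andP[q1W q2W] eq].
  rewrite /f /=; case Hp: (o p1 p2); case Hq: (o q1 q2) => // -[E1].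
    move=> {q1W}; subst q1; case: (eqVneq p2 q2) => [-> //|npq].
    by case: (tf _ _ _ p1W p2W q2W ep (op _ _ _ Hp Hq npq) eq).
  move=> {q2W}; subst q2.
  have Hp' : o p2 p1 by move: (ori _ _ ep); rewrite Hp; case: (o p2 p1).
  have Hq' : o p2 q1 by move: (ori _ _ eq); rewrite Hq; case: (o p2 q1).
  case: (eqVneq p1 q1) => [-> //|npq].
  by case: (tf _ _ _ p2W p1W q1W (oe _ _ Hp') (op _ _ _ Hp' Hq' npq) (oe _ _ Hq')).
rewrite /PP -(card_in_imset inj).
have -> : 2 * #|W| = #|setX W [set: bool]| by rewrite cardsX cardsT card_bool mulnC.
apply: subset_leq_card; apply/subsetP=> x /imsetP[[p1 p2]]; rewrite !inE /= => /andP[/andP[p1W p2W] _] ->.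
by rewrite /f /=; case: (o p1 p2); rewrite /= ?p1W ?p2W.
Qed.

Lemma PP_prod (T1 T2 : finType) (e1 : rel T1) (e2 : rel T2) S R :
  PP e1 S * PP e2 R <= PP (direct_prod e1 e2) (setX S R).
Proof.
rewrite /PP -cardsX.
pose g (pq : (T1 * T1) * (T2 * T2)) := ((pq.1.1, pq.2.1), (pq.1.2, pq.2.2)).
have ginj : injective g by move=> [[a b] [c d]] [[a' b'] [c' d']] [-> -> -> ->].
rewrite -(card_imset _ ginj); apply: subset_leq_card; apply/subsetP => x.
case/imsetP=> [[[a b] [c d]]]; rewrite !inE /= => /andP[/andP[/andP[aS bS] eab] /andP[/andP[cR dR] ecd]] ->.
by rewrite /= aS bS cR dR /direct_prod /= eab ecd.
Qed.

Lemma key_prod (T1 T2 : finType) (e1 : rel T1) (e2 : rel T2) o S R :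
  one_perfect (direct_prod e1 e2) o -> trifree e1 S \/ trifree e2 R ->
  PP e1 S * PP e2 R <= 2 * (#|S| * #|R|).
Proof.
move=> op tf; rewrite -cardsX; apply: leq_trans (PP_prod _ _ S R) _.
apply: (key op) => -[a1 a2] [b1 b2] [c1 c2]; rewrite !inE /direct_prod /=.
case/andP=> a1S a2R /andP[b1S b2R] /andP[c1S c2R] /andP[ab1 ab2] /andP[bc1 bc2] /andP[ac1 ac2].
case: tf => tf; [exact: (tf a1 b1 c1) | exact: (tf a2 b2 c2)].
Qed.

Lemma cross (T : finType) (e : rel T) (S : {set T}) x p : x \in S -> path e x p ->
  last x p \notin S -> exists z w, [/\ z \in S, w \notin S & e z w].
Proof.
elim: p x => [|y p IH] x xS /=; first by rewrite xS.
case/andP=> exy pp Hl.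
case yS: (y \in S); first exact: (IH y).
by exists x, y; rewrite yS.
Qed.

Lemma conn_grow (T : finType) (e : rel T) : symmetric e -> (forall x y, connect e x y) ->
  forall k, 0 < k <= #|T| -> exists S : {set T}, #|S| = k /\ 2 * (k - 1) <= PP e S.
Proof.
move=> esym conn; elim=> [|k IH] //; case: k IH => [|k] IH.
  move=> /andP[_ HT]; have [x _] : exists x, x \in [set: T] by apply/card_gt0P; rewrite cardsT.
  exists [set x]; split; first exact: cards1.
  by rewrite muln0.
move=> /andP[_ kT].
have [S [cS HS]] : exists S : {set T}, #|S| = k.+1 /\ 2 * (k.+1 - 1) <= PP e S.
  by apply: IH; apply/andP; split => //; exact: ltnW.
have [y yS] : exists y, y \notin S.
  case: (boolP [exists y, y \notin S]) => [/existsP[y yS]|/existsPn all]; first by exists y.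
  have : #|[set: T]| <= #|S| by apply: subset_leq_card; apply/subsetP=> z _; have := all z; rewrite negbK.
  by rewrite cardsT cS leqNgt kT.
have [x xS] : exists x, x \in S by apply/card_gt0P; rewrite cS.
have /connectP[p pp Hl] := conn x y.
have [z [w [zS wS ezw]]] : exists z w, [/\ z \in S, w \notin S & e z w] by apply: (cross xS pp); rewrite -Hl.
exists (w |: S); split; first by rewrite cardsU1 wS cS.
have := growN esym wS.
have : 0 < #|[set z in S | e w z]| by apply/card_gt0P; exists z; rewrite inE zS esym.
move: HS; rewrite subn1 /=; lia.
Qed.

Lemma embed_1po (X Y : finType) (eX : rel X) (eY : rel Y) (f : X -> Y) :
  injective f -> (forall x y, eY (f x) (f y) = eX x y) ->
  one_perfectly_orientable eY -> one_perfectly_orientable eX.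
Proof.
move=> finj H [o [[oe ori] op]]; exists (fun x y => o (f x) (f y)); split; [split|].
- by move=> u v /oe; rewrite H.
- by move=> u v; rewrite -H; exact: ori.
- move=> v x y ovx ovy xy; rewrite -H; apply: op ovx ovy _.
  by rewrite (inj_eq finj).
Qed.

Lemma embed_prod (A B T1 T2 : finType) (eA : rel A) (eB : rel B) (e1 : rel T1) (e2 : rel T2)
  (f : A -> T1) (g : B -> T2) : injective f -> injective g ->
  (forall x y, e1 (f x) (f y) = eA x y) -> (forall x y, e2 (g x) (g y) = eB x y) ->
  one_perfectly_orientable (direct_prod e1 e2) -> one_perfectly_orientable (direct_prod eA eB).
Proof.
move=> finj ginj Hf Hg; apply: (embed_1po (f := fun p => (f p.1, g p.2))).
  by move=> [a b] [c d] /= [/finj -> /ginj ->].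
by move=> [a b] [c d]; rewrite /direct_prod /= Hf Hg.
Qed.

Lemma swap_1po (T1 T2 : finType) (e1 : rel T1) (e2 : rel T2) :
  one_perfectly_orientable (direct_prod e1 e2) -> one_perfectly_orientable (direct_prod e2 e1).
Proof.
apply: (embed_1po (f := fun p => (p.2, p.1))).
  by move=> [a b] [c d] /= [-> ->].
by move=> [a b] [c d]; rewrite /direct_prod /= andbC.
Qed.

Section Checker.
Variable V : finType.
Variable e : rel V.
Variable vs : seq V.

Definition rcond (q : V * V) (z : V) := e q.1 z && (z != q.2) && ~~ e q.2 z.
Definition rstep (S : seq (V * V)) : seq (V * V) :=
  undup (S ++ [seq (z, q.1) | q <- S, z <- [seq z <- vs | rcond q z]]).
Definition conflict (S : seq (V * V)) := has (fun p => (p.2, p.1) \in S) S.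
Definition refute (a b : V) n :=
  e a b && conflict (iter n rstep [:: (a, b)]) && conflict (iter n rstep [:: (b, a)]).

Lemma refute_sound a b n : refute a b n -> ~ one_perfectly_orientable e.
Proof.
case/andP=> /andP[eab c1] c2 [o [[oe ori] op]].
have sound : forall S, (forall p, p \in S -> o p.1 p.2) -> forall p, p \in rstep S -> o p.1 p.2.
  move=> S HS p; rewrite mem_undup mem_cat => /orP[/HS //|].
  case/allpairsPdep=> q [z [qS zin ->]].
  move: zin; rewrite mem_filter /rcond => /andP[/andP[/andP[eqz zq] nez] _].
  have oq := HS q qS; rewrite /=.
  have nqz : o q.1 z = false.
    apply/negP => oqz; have := op _ _ _ oq oqz; rewrite eq_sym zq => /(_ isT).
    by rewrite (negbTE nez).
  by move: (ori _ _ eqz); rewrite nqz; case: (o z q.1).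
have isound : forall n S, (forall p, p \in S -> o p.1 p.2) -> forall p, p \in iter n rstep S -> o p.1 p.2.
  by elim=> [|m IH] S HS //=; apply: sound; apply: IH.
have noc : forall S, (forall p, p \in S -> o p.1 p.2) -> ~~ conflict S.
  move=> S HS; apply/hasP => -[p pS qS].
  have o1 := HS p pS; have o2 := HS _ qS.
  by move: (ori _ _ (oe _ _ o1)); rewrite o1 o2.
have := ori a b eab; case Hab: (o a b) => /= H.
  have h1 : forall p, p \in [:: (a, b)] -> o p.1 p.2 by move=> p; rewrite inE => /eqP ->.
  by move: (noc _ (isound n _ h1)); rewrite c1.
have Hba : o b a by move: H; case: (o b a).
have h1 : forall p, p \in [:: (b, a)] -> o p.1 p.2 by move=> p; rewrite inE => /eqP ->.
by move: (noc _ (isound n _ h1)); rewrite c2.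
Qed.

Definition one_perfectb (o : rel V) :=
  all (fun u => all (fun v => o u v ==> e u v) vs) vs &&
  all (fun u => all (fun v => e u v ==> (o u v != o v u)) vs) vs &&
  all (fun v => all (fun x => all (fun y => o v x ==> o v y ==> (x != y) ==> e x y) vs) vs) vs.

Lemma one_perfectbP o : (forall v, v \in vs) -> one_perfectb o -> one_perfectly_orientable e.
Proof.
move=> cov; case/andP=> /andP[/allP H1 /allP H2] /allP H3; exists o; split; [split|].
- by move=> u v; have /allP/(_ v (cov v))/implyP := H1 u (cov u).
- by move=> u v; have /allP/(_ v (cov v))/implyP := H2 u (cov u).
- move=> v x y ovx ovy xy.
  have /allP/(_ x (cov x))/allP/(_ y (cov y)) := H3 v (cov v).
  by move=> /implyP/(_ ovx)/implyP/(_ ovy)/implyP/(_ xy).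
Qed.

End Checker.

Set Implicit Arguments. Unset Strict Implicit. Unset Printing Implicit Defensive.

Definition K3 : rel 'I_3 := fun i j => val i != val j.
Definition K13 : rel 'I_4 := fun i j => (val i != val j) && ((val i == 0) || (val j == 0)).
Definition C4 : rel 'I_4 := fun i j => ((i.+1 %% 4) == j) || ((j.+1 %% 4) == i).

Definition o0 := @Ordinal 3 0 isT.
Definition o1 := @Ordinal 3 1 isT.
Definition o2 := @Ordinal 3 2 isT.
Definition q0 := @Ordinal 4 0 isT.
Definition q1 := @Ordinal 4 1 isT.
Definition q2 := @Ordinal 4 2 isT.
Definition q3 := @Ordinal 4 3 isT.
Definition l3 := [:: o0; o1; o2].
Definition l4 := [:: q0; q1; q2; q3].
Definition l33 := [seq (x, y) | x <- l3, y <- l3].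
Definition l34 := [seq (x, y) | x <- l3, y <- l4].
Definition l43 := [seq (x, y) | x <- l4, y <- l3].

Lemma ref_K3K3 : refute (direct_prod K3 K3) l33 (o0, o0) (o1, o1) 10.
Proof. by vm_compute. Qed.
Lemma ref_K3P3 : refute (direct_prod K3 (path_graph 3)) l33 (o0, o0) (o1, o1) 10.
Proof. by vm_compute. Qed.
Lemma ref_P3K3 : refute (direct_prod (path_graph 3) K3) l33 (o0, o0) (o1, o1) 10.
Proof. by vm_compute. Qed.
Lemma ref_K13P3 : refute (direct_prod K13 (path_graph 3)) l43 (q0, o0) (q1, o1) 10.
Proof. by vm_compute. Qed.
Lemma ref_P3K13 : refute (direct_prod (path_graph 3) K13) l34 (o0, q0) (o1, q1) 10.
Proof. by vm_compute. Qed.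
Lemma ref_C4P3 : refute (direct_prod C4 (path_graph 3)) l43 (q0, o0) (q1, o1) 10.
Proof. by vm_compute. Qed.
Lemma ref_P3C4 : refute (direct_prod (path_graph 3) C4) l34 (o0, q0) (o1, q1) 10.
Proof. by vm_compute. Qed.

Lemma mem_l3 (x : 'I_3) : x \in l3.
Proof. by case: x => [[|[|[|n]]] H]. Qed.
Lemma mem_l4 (x : 'I_4) : x \in l4.
Proof. by case: x => [[|[|[|[|n]]]] H]. Qed.
Lemma mem_l33 x : x \in l33.
Proof. by case: x => a b; apply/allpairsP; exists (a, b); rewrite mem_l3 mem_l3. Qed.
Lemma mem_l34 x : x \in l34.
Proof. by case: x => a b; apply/allpairsP; exists (a, b); rewrite mem_l3 mem_l4. Qed.
Lemma mem_l43 x : x \in l43.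
Proof. by case: x => a b; apply/allpairsP; exists (a, b); rewrite mem_l4 mem_l3. Qed.

Definition orient (A B : nat) (arcs : seq (nat * nat * nat * nat)) : rel ('I_A * 'I_B) :=
  fun u v => (val u.1, val u.2, val v.1, val v.2) \in arcs.

Definition arcs33 := [:: (0,1,1,2); (0,2,1,1); (1,0,0,1); (1,1,0,0); (1,2,2,1); (2,0,1,1); (2,1,1,0); (2,2,1,1)].
Definition arcs34 := [:: (0,0,1,1); (0,1,1,2); (0,2,1,3); (0,3,1,2); (1,0,0,1); (1,1,0,2); (1,2,2,1); (1,3,2,2); (2,0,1,1); (2,1,1,0); (2,2,1,1); (2,3,1,2)].
Definition arcs43 := [:: (0,0,1,1); (0,1,1,2); (0,2,1,1); (1,0,0,1); (1,1,2,2); (1,2,2,1); (2,0,1,1); (2,1,1,0); (2,2,3,1); (3,0,2,1); (3,1,2,0); (3,2,2,1)].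

Lemma opo33 : one_perfectly_orientable (direct_prod (path_graph 3) (path_graph 3)).
Proof.
refine (@one_perfectbP _ (direct_prod (path_graph 3) (path_graph 3)) l33 (@orient 3 3 arcs33) mem_l33 _); by vm_compute.
Qed.
Lemma opo34 : one_perfectly_orientable (direct_prod (path_graph 3) (path_graph 4)).
Proof.
apply: (@one_perfectbP _ _ l34 (@orient 3 4 arcs34) mem_l34); by vm_compute.
Qed.
Lemma opo43 : one_perfectly_orientable (direct_prod (path_graph 4) (path_graph 3)).
Proof.
apply: (@one_perfectbP _ _ l43 (@orient 4 3 arcs43) mem_l43); by vm_compute.
Qed.

Set Implicit Arguments. Unset Strict Implicit. Unset Printing Implicit Defensive.

Section Struct.
Variable T : finType.
Variable e : rel T.
Hypothesis esym : symmetric e.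
Hypothesis eirr : irreflexive e.

Lemma adj_neq x y : e x y -> x != y.
Proof. by move=> exy; apply/negP=> /eqP E; rewrite E eirr in exy. Qed.

Lemma mk_emb n (R : rel 'I_n) (l : seq T) a : uniq l -> size l = n ->
  (forall i j : 'I_n, e (nth a l i) (nth a l j) = R i j) ->
  exists f : 'I_n -> T, injective f /\ forall i j, e (f i) (f j) = R i j.
Proof.
move=> ul sl H; exists (fun i => nth a l i); split=> // i j /eqP.
by rewrite nth_uniq ?sl // => /eqP; apply: ord_inj.
Qed.

Ltac cl := solve [ done | by rewrite esym | by rewrite eirr | by apply/negbTE
                  | by rewrite esym; apply/negbTE ].

Lemma emb_K3 a b c : e a b -> e b c -> e a c ->
  exists f : 'I_3 -> T, injective f /\ forall i j, e (f i) (f j) = K3 i j.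
Proof.
move=> eab ebc eac; apply: (@mk_emb 3 K3 [:: a; b; c] a) => //.
  by rewrite /= !inE negb_or (adj_neq eab) (adj_neq eac) (adj_neq ebc).
move=> [[|[|[|i]]] Hi] [[|[|[|j]]] Hj] //=; rewrite /K3 /=; cl.
Qed.

Lemma emb_P3 a b c : e a b -> e b c -> ~~ e a c -> a != c ->
  exists f : 'I_3 -> T, injective f /\ forall i j, e (f i) (f j) = path_graph 3 i j.
Proof.
move=> eab ebc eac ac; apply: (@mk_emb 3 _ [:: a; b; c] a) => //.
  by rewrite /= !inE negb_or (adj_neq eab) ac (adj_neq ebc).
move=> [[|[|[|i]]] Hi] [[|[|[|j]]] Hj] //=; rewrite /path_graph /=; cl.
Qed.

Lemma emb_P2 a b : e a b ->
  exists f : 'I_2 -> T, injective f /\ forall i j, e (f i) (f j) = path_graph 2 i j.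
Proof.
move=> eab; apply: (@mk_emb 2 _ [:: a; b] a) => //.
  by rewrite /= !inE (adj_neq eab).
move=> [[|[|i]] Hi] [[|[|j]] Hj] //=; rewrite /path_graph /=; cl.
Qed.

Lemma emb_K13 c x y z : e c x -> e c y -> e c z -> ~~ e x y -> ~~ e x z -> ~~ e y z ->
  x != y -> x != z -> y != z ->
  exists f : 'I_4 -> T, injective f /\ forall i j, e (f i) (f j) = K13 i j.
Proof.
move=> ecx ecy ecz exy exz eyz xy xz yz; apply: (@mk_emb 4 _ [:: c; x; y; z] c) => //.
  by rewrite /= !inE !negb_or (adj_neq ecx) (adj_neq ecy) (adj_neq ecz) xy xz yz.
move=> [[|[|[|[|i]]]] Hi] [[|[|[|[|j]]]] Hj] //=; rewrite /K13 /=; cl.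
Qed.

Lemma emb_C4 x v y w : e x v -> e v y -> e y w -> e w x -> ~~ e x y -> ~~ e v w ->
  x != y -> v != w ->
  exists f : 'I_4 -> T, injective f /\ forall i j, e (f i) (f j) = C4 i j.
Proof.
move=> exv evy eyw ewx exy evw xy vw; apply: (@mk_emb 4 _ [:: x; v; y; w] x) => //.
  have xw : x != w by rewrite eq_sym (adj_neq ewx).
  by rewrite /= !inE !negb_or (adj_neq exv) (adj_neq evy) (adj_neq eyw) xy xw vw.
move=> [[|[|[|[|i]]]] Hi] [[|[|[|[|j]]]] Hj] //=; rewrite /C4 /=; cl.
Qed.

Lemma emb_P4 a b c d : e a b -> e b c -> e c d -> ~~ e a c -> ~~ e a d -> ~~ e b d ->
  a != c -> a != d -> b != d ->
  exists f : 'I_4 -> T, injective f /\ forall i j, e (f i) (f j) = path_graph 4 i j.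
Proof.
move=> eab ebc ecd eac ead ebd ac ad bd; apply: (@mk_emb 4 _ [:: a; b; c; d] a) => //.
  by rewrite /= !inE !negb_or (adj_neq eab) (adj_neq ebc) (adj_neq ecd) ac ad bd.
move=> [[|[|[|[|i]]]] Hi] [[|[|[|[|j]]]] Hj] //=; rewrite /path_graph /=; cl.
Qed.

Lemma iso_of_emb (A : finType) (R : rel A) (f : A -> T) : injective f -> #|A| = #|T| ->
  (forall i j, e (f i) (f j) = R i j) -> graph_iso e R.
Proof.
move=> finj cA H.
have fb : bijective f by apply: inj_card_bij => //; rewrite cA.
case: fb => g fg gf; exists g; split; first by exists f.
by move=> u v; rewrite -H !gf.
Qed.

Lemma notin_small (S : {set T}) : #|S| < #|T| -> exists y, y \notin S.
Proof.
move=> cS; case: (boolP [exists y, y \notin S]) => [/existsP[y yS]|/existsPn all]; first by exists y.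
have : #|[set: T]| <= #|S| by apply: subset_leq_card; apply/subsetP=> z _; have := all z; rewrite negbK.
by rewrite cardsT leqNgt cS.
Qed.

Lemma some_edge (conn : forall x y, connect e x y) : 1 < #|T| -> exists a b, e a b.
Proof.
move=> cT; have [x _] : exists x, x \in [set: T] by apply/card_gt0P; rewrite cardsT ltnW.
have [y yx] : exists y, y \notin [set x] by apply: notin_small; rewrite cards1.
have /connectP[p pp Hl] := conn x y.
have [z [w [_ _ ezw]]] : exists z w, [/\ z \in [set x], w \notin [set x] & e z w].
  by apply: (cross (set11 x) pp); rewrite -Hl.
by exists z, w.
Qed.

Lemma two_nbrs (conn : forall x y, connect e x y) : 2 < #|T| ->
  exists v x y, [/\ x != y, e v x & e v y].
Proof.
move=> cT; have [a [b eab]] := some_edge conn (ltnW cT).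
have [c cab] : exists c, c \notin [set a; b].
  apply: notin_small; rewrite cards2; apply: leq_ltn_trans cT.
  by case: (a != b).
have /connectP[p pp Hl] := conn a c.
have [z [w [zab wab ezw]]] : exists z w, [/\ z \in [set a; b], w \notin [set a; b] & e z w].
  apply: (@cross T e [set a; b] a p) => //; first by rewrite !inE eqxx.
  by rewrite -Hl.
move: wab zab; rewrite !inE negb_or => /andP[wa wb] /orP[] /eqP Hz; rewrite Hz in ezw.
  by exists a, b, w; split => //; rewrite eq_sym.
exists b, a, w; split => //; first by rewrite eq_sym.
by rewrite esym.
Qed.

Lemma tri_or_P3 (conn : forall x y, connect e x y) : 2 < #|T| ->
  (exists a b c, [/\ e a b, e b c & e a c]) \/
  (exists a b c, [/\ e a b, e b c, ~~ e a c & a != c]).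
Proof.
move=> cT; have [v [x [y [xy evx evy]]]] := two_nbrs conn cT.
case exy: (e x y).
  by left; exists x, v, y; rewrite esym.
by right; exists x, v, y; rewrite esym evx evy exy.
Qed.

Lemma ident2 a b : #|T| = 2 -> e a b -> graph_iso e (path_graph 2).
Proof.
move=> cT eab; have [f [finj Hf]] := emb_P2 eab.
by apply: (iso_of_emb finj) => //; rewrite card_ord.
Qed.

Lemma ident3 a b c : #|T| = 3 -> e a b -> e b c -> ~~ e a c -> a != c ->
  graph_iso e (path_graph 3).
Proof.
move=> cT eab ebc eac ac; have [f [finj Hf]] := emb_P3 eab ebc eac ac.
by apply: (iso_of_emb finj) => //; rewrite card_ord.
Qed.

Lemma seq_out (s : seq T) : size s < #|T| -> exists w, w \notin s.
Proof.
move=> cs; case: (boolP [exists w, w \notin s]) => [/existsP[w ws]|/existsPn all]; first by exists w.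
have : #|T| <= #|s|.
  by apply: subset_leq_card; apply/subsetP=> z _; have := all z; rewrite negbK.
by move=> H; have := leq_trans H (card_size s); rewrite leqNgt cs.
Qed.

Lemma seq_cover (s : seq T) : uniq s -> size s = #|T| -> forall z, z \in s.
Proof.
move=> us cs z; apply/negPn/negP => zs.
have u' : uniq (z :: s) by rewrite /= zs.
have := max_card (mem (z :: s)); rewrite (card_uniqP u') /= cs.
by rewrite ltnn.
Qed.

Lemma ident4 (conn : forall x y, connect e x y) (cT : #|T| = 4)
  (tf : forall a b c, e a b -> e b c -> e a c -> False)
  (noK13 : forall f : 'I_4 -> T, injective f -> (forall i j, e (f i) (f j) = K13 i j) -> False)
  (noC4 : forall f : 'I_4 -> T, injective f -> (forall i j, e (f i) (f j) = C4 i j) -> False)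
  x v y : e x v -> e v y -> ~~ e x y -> x != y -> graph_iso e (path_graph 4).
Proof.
move=> exv evy exy xy.
have xv := adj_neq exv; have vy := adj_neq evy.
have [w wS] : exists w, w \notin [:: x; v; y] by apply: seq_out; rewrite cT.
move: wS; rewrite !inE !negb_or => /and3P[wx wv wy].
have evx : e v x by rewrite esym.
have nvw : ~~ e v w.
  apply/negP => evw.
  have nxw : ~~ e x w by apply/negP => exw; exact: (tf _ _ _ exv evw exw).
  have nyw : ~~ e y w by apply/negP => eyw; exact: (tf _ _ _ evy eyw evw).
  have wx' : x != w by rewrite eq_sym.
  have wy' : y != w by rewrite eq_sym.
  have [f [finj Hf]] := emb_K13 evx evy evw exy nxw nyw xy wx' wy'.
  exact: (noK13 f finj Hf).
have u4 : uniq [:: x; v; y; w].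
  by rewrite /= !inE !negb_or xv xy (eq_sym x w) wx vy (eq_sym v w) wv (eq_sym y w) wy.
have cov := seq_cover u4 (Logic.eq_sym cT).
have [u ewu] : exists u, e w u.
  have /connectP[p pp Hl] := conn w x.
  have [z [u [zw uw ezu]]] : exists z u, [/\ z \in [set w], u \notin [set w] & e z u].
    apply: (@cross T e [set w] w p) => //; first by rewrite inE.
    by rewrite -Hl inE eq_sym.
  by exists u; move: zw; rewrite inE => /eqP <-.
have := cov u; rewrite !inE => Hu.
have ewxy : e w x || e w y.
  case/or4P: Hu => /eqP Hu; rewrite Hu in ewu.
  - by rewrite ewu.
  - by rewrite esym ewu in nvw.
  - by rewrite ewu orbT.
  - by rewrite eirr in ewu.
case ewx: (e w x); case ewy: (e w y); rewrite ?ewx ?ewy // in ewxy.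
- have eyw : e y w by rewrite esym.
  have vw' : v != w by rewrite eq_sym.
  have [f [finj Hf]] := emb_C4 exv evy eyw ewx exy nvw xy vw'.
  by case: (noC4 f finj Hf).
- have nwv : ~~ e w v by rewrite esym.
  have nwy : ~~ e w y by rewrite ewy.
  have [f [finj Hf]] := emb_P4 ewx exv evy nwv nwy exy wv wy xy.
  by apply: (iso_of_emb finj) => //; rewrite card_ord.
- have eyw : e y w by rewrite esym.
  have nxw : ~~ e x w by rewrite esym ewx.
  have xw : x != w by rewrite eq_sym.
  have vw' : v != w by rewrite eq_sym.
  have [f [finj Hf]] := emb_P4 exv evy eyw exy nxw nvw xy xw vw'.
  by apply: (iso_of_emb finj) => //; rewrite card_ord.
Qed.


End Struct.

Set Implicit Arguments. Unset Strict Implicit. Unset Printing Implicit Defensive.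

Section Claim.
Variable T : finType.

Definition claim (F : rel T) (g : T -> option T) :=
  (forall x y, g x = Some y -> F x y) /\
  (forall x y, F x y -> (g x == Some y) != (g y == Some x)).

Definition rem_edge (F : rel T) c d : rel T :=
  fun x y => F x y && ~~ (((x == c) && (y == d)) || ((x == d) && (y == c))).

Lemma claim_ext F1 F2 g : F1 =2 F2 -> claim F1 g -> claim F2 g.
Proof.
move=> E [H1 H2]; split=> x y; first by rewrite -E; apply: H1.
by rewrite -E; apply: H2.
Qed.

Lemma rem_edgeC F c d : rem_edge F c d =2 rem_edge F d c.
Proof. by move=> x y; rewrite /rem_edge orbC. Qed.

Lemma extend_claim F c d g : irreflexive F -> F c d -> claim (rem_edge F c d) g -> g c = None ->
  claim F (fun x => if x == c then Some d else g x).
Proof.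
move=> Firr Fcd [H1 H2] gc; split.
  move=> x y; case: eqP => [-> [<-] //| _ /H1]; by case/andP.
move=> x y Fxy.
have gdc : g d == Some c = false.
  apply/negbTE/negP=> /eqP /H1; rewrite /rem_edge !eqxx orbT andbF.
  by [].
case: (eqVneq x c) => [xc | xc]; case: (eqVneq y c) => [yc | yc].
- by rewrite xc yc Firr in Fxy.
- subst x; rewrite (inj_eq (@Some_inj _)).
  case: (eqVneq d y) => [<- | yd]; first by rewrite gdc.
  have := H2 c y; rewrite /rem_edge Fxy eqxx (eq_sym y d) (negbTE yd) (negbTE yc) !andbF /= gc.
  by move=> /(_ isT).
- subst y; rewrite (inj_eq (@Some_inj _)).
  case: (eqVneq d x) => [<- | xd]; first by rewrite gdc.
  have := H2 x c; rewrite /rem_edge Fxy (negbTE xc) eqxx andbT (eq_sym x d) (negbTE xd) /= gc.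
  by move=> /(_ isT); case: (g x == Some c).
- have := H2 x y; rewrite /rem_edge Fxy (negbTE xc) (negbTE yc) !andbF /=.
  by move=> /(_ isT).
Qed.

Lemma rem_sym F c d : symmetric F -> symmetric (rem_edge F c d).
Proof.
move=> Fs x y; rewrite /rem_edge Fs.
by case: (x == c); case: (y == d); case: (x == d); case: (y == c).
Qed.

Lemma forest_claim n (F : rel T) : #|[set p : T * T | F p.1 p.2]| <= n ->
  symmetric F -> irreflexive F -> (forall s, ~~ is_cycle F s) ->
  forall R : {set T}, (forall r r', r \in R -> r' \in R -> connect F r r' -> r = r') ->
  exists g, claim F g /\ forall r, r \in R -> g r = None.
Proof.
elim: n F => [|n IH] F cF Fs Fi Fa R HR;
  (case: (boolP [exists p : T * T, F p.1 p.2]) => [/existsP[[u v] /= Fuv] | /existsPn noF];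
   last first; [exists (fun _ => None); split => //; split => // x y;
                by have := noF (x, y); move=> /negbTE /= -> | ]).
  by move: cF; rewrite leqn0 => /eqP/cards0_eq/setP/(_ (u, v)); rewrite !inE Fuv.
set F' := rem_edge F u v.
have cF' : #|[set p : T * T | F' p.1 p.2]| <= n.
  rewrite -ltnS; apply: leq_trans cF; apply: proper_card; apply/properP; split.
    by apply/subsetP => p; rewrite !inE; case/andP.
  by exists (u, v); rewrite !inE /= ?Fuv // /F' /rem_edge !eqxx /= andbF.
have Fs' : symmetric F' by apply: rem_sym.
have Fi' : irreflexive F' by move=> x; rewrite /F' /rem_edge Fi.
have sub' : subrel F' F by move=> x y /andP[].
have Fa' : forall s, ~~ is_cycle F' s.
  move=> s; apply/negP => /and3P[us ss cs]; have := Fa s.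
  by rewrite /is_cycle us ss (sub_cycle sub' cs).
have uv : u != v by apply/negP => /eqP E; rewrite E Fi in Fuv.
have disc : ~~ connect F' u v.
  apply/negP => /connectP[p pp Hl]; move: Hl.
  case: (shortenP pp) => p' pp' up' _ Hl.
  case: p' pp' up' Hl => [|w [|w' p'']] pp' up' Hl.
  - by rewrite Hl eqxx in uv.
  - by rewrite /= in Hl; move: pp'; rewrite /= -Hl /F' /rem_edge !eqxx /= andbF.
  have := Fa [:: u, w, w' & p'']; apply/negP/negPn.
  rewrite /is_cycle up' /=.
  change (path F u (rcons [:: w, w' & p''] u)).
  by rewrite rcons_path (sub_path sub' pp') -Hl Fs Fuv.
have subF : forall x y, connect F' x y -> connect F x y.
  by move=> x y; apply: connect_sub => a b /sub' /connect1.
have csym' := sym_connect_sym Fs'.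
case: (boolP [exists r, (r \in R) && connect F' r u]) => [/existsP[r0 /andP[r0R r0u]] | /existsPn noR].
  have key : forall r', r' \in R -> connect F' v r' -> False.
    move=> r' r'R Hc.
    have E := HR r0 r' r0R r'R (connect_trans (subF _ _ r0u) (connect_trans (connect1 Fuv) (subF _ _ Hc))).
    subst r'; move: disc; rewrite csym' (connect_trans Hc r0u) //.
  have vR : v \notin R by apply/negP => vR; apply: (key v vR (connect0 _ _)).
  have HR' : forall r r', r \in v |: R -> r' \in v |: R -> connect F' r r' -> r = r'.
    move=> r r'; rewrite !inE => /orP[/eqP->|rR] /orP[/eqP->|r'R] Hc //.
    - by case: (key r' r'R Hc).
    - by rewrite csym' in Hc; case: (key r rR Hc).
    - exact: HR r r' rR r'R (subF _ _ Hc).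
  have [g' [Hg' Hn]] := IH F' cF' Fs' Fi' Fa' (v |: R) HR'.
  exists (fun x => if x == v then Some u else g' x); split.
    apply: extend_claim => //; first by rewrite Fs.
      exact: claim_ext (rem_edgeC F u v) Hg'.
    by apply: Hn; rewrite !inE eqxx.
  move=> r rR; have -> : (r == v) = false by apply/negP => /eqP E; move: rR; rewrite E (negbTE vR).
  by apply: Hn; rewrite !inE rR orbT.
have uR : u \notin R by apply/negP => uR; have := noR u; rewrite uR connect0.
have HR' : forall r r', r \in u |: R -> r' \in u |: R -> connect F' r r' -> r = r'.
  move=> r r'; rewrite !inE => /orP[/eqP->|rR] /orP[/eqP->|r'R] Hc //.
  - by rewrite csym' in Hc; have := noR r'; rewrite r'R Hc.
  - by have := noR r; rewrite rR Hc.
  - exact: HR r r' rR r'R (subF _ _ Hc).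
have [g' [Hg' Hn]] := IH F' cF' Fs' Fi' Fa' (u |: R) HR'.
exists (fun x => if x == u then Some v else g' x); split.
  apply: extend_claim => //.
  by apply: Hn; rewrite !inE eqxx.
move=> r rR; have -> : (r == u) = false by apply/negP => /eqP E; move: rR; rewrite E (negbTE uR).
by apply: Hn; rewrite !inE rR orbT.
Qed.


Lemma pseudo_claim (F : rel T) : symmetric F -> irreflexive F -> pseudotree F ->
  exists g, claim F g.
Proof.
move=> Fs Fi [_ Hc].
case: (classic (exists s, is_cycle F s)) => [[s cs] | nc].
  case: s cs => [|u r] cs; first by case/and3P: cs.
  set v := next (u :: r) u.
  have Fuv : F u v by apply: next_cycle (mem_head _ _); case/and3P: cs.
  set F' := rem_edge F u v.
  have sub' : subrel F' F by move=> x y /andP[].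
  have Fa' : forall s, ~~ is_cycle F' s.
    move=> s'; apply/negP => cs'.
    have cs'F : is_cycle F s' by case/and3P: cs' => us ss cc; rewrite /is_cycle us ss (sub_cycle sub' cc).
    have := Hc _ _ cs cs'F u v; rewrite /cycle_edge mem_head eqxx /=.
    case/esym/andP => us' /orP[] /eqP E.
      have := next_cycle (_ : cycle F' s') us'; rewrite E /F' /rem_edge !eqxx /= andbF.
      by case/and3P: cs' => _ _ c; move/(_ c).
    have := prev_cycle (_ : cycle F' s') us'; rewrite E /F' /rem_edge !eqxx /= orbT andbF.
    by case/and3P: cs' => _ _ c; move/(_ c).
  have Fs' : symmetric F' by apply: rem_sym.
  have Fi' : irreflexive F' by move=> x; rewrite /F' /rem_edge Fi.
  have HR : forall r1 r2, r1 \in [set u] -> r2 \in [set u] -> connect F' r1 r2 -> r1 = r2.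
    by move=> r1 r2; rewrite !inE => /eqP -> /eqP ->.
  have [g' [Hg' Hn]] := forest_claim (leqnn _) Fs' Fi' Fa' HR.
  exists (fun x => if x == u then Some v else g' x).
  apply: extend_claim => //.
  by apply: Hn; rewrite inE.
have Fa : forall s, ~~ is_cycle F s by move=> s; apply/negP => H; apply: nc; exists s.
have HR : forall r1 r2, r1 \in set0 -> r2 \in (set0 : {set T}) -> connect F r1 r2 -> r1 = r2.
  by move=> r1 r2; rewrite inE.
by have [g [Hg _]] := forest_claim (leqnn _) Fs Fi Fa HR; exists g.
Qed.

End Claim.

Set Implicit Arguments. Unset Strict Implicit. Unset Printing Implicit Defensive.

Lemma no_three (T : finType) (e : rel T) : irreflexive e -> #|T| <= 2 ->
  forall a b c, e a b -> e b c -> e a c -> False.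
Proof.
move=> ei cT a b c eab ebc eac.
have u : uniq [:: a; b; c] by rewrite /= !inE negb_or (adj_neq ei eab) (adj_neq ei eac) (adj_neq ei ebc).
have := max_card (mem [:: a; b; c]); rewrite (card_uniqP u) /= => h.
by have := leq_trans h cT.
Qed.

Lemma K2_case (T1 T2 : finType) (e1 : rel T1) (e2 : rel T2) :
  simple_graph e1 -> simple_graph e2 -> connected_graph e1 -> connected_graph e2 ->
  #|T1| = 2 -> one_perfectly_orientable (direct_prod e1 e2) ->
  graph_iso e1 (path_graph 2) /\ pseudotree e2.
Proof.
move=> [e1s e1i] [e2s e2i] cG cH c2 [o Ho].
split.
  have [a [b eab]] : exists a b, e1 a b by apply: (some_edge cG); rewrite c2.
  exact: (ident2 e1s e1i c2 eab).
apply: (sparse_pseudotree e2s e2i); last exact: cH. move=> R.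
have [S [cS HS]] : exists S : {set T1}, #|S| = 2 /\ 2 * (2 - 1) <= PP e1 S.
  by apply: (conn_grow e1s cG); rewrite c2.
have tf : trifree e1 S by move=> a b c _ _ _; apply: (no_three e1i); rewrite c2.
have := key_prod (R := R) Ho (or_introl tf); rewrite cS => h.
have h1 : 2 * PP e2 R <= PP e1 S * PP e2 R by rewrite leq_mul2r HS orbT.
by move: (leq_trans h1 h); rewrite leq_pmul2l.
Qed.

Lemma bad (A B T1 T2 : finType) (eA : rel A) (eB : rel B) (e1 : rel T1) (e2 : rel T2)
  vs a b n (f : A -> T1) (g : B -> T2) :
  refute (direct_prod eA eB) vs a b n -> injective f -> injective g ->
  (forall x y, e1 (f x) (f y) = eA x y) -> (forall x y, e2 (g x) (g y) = eB x y) ->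
  one_perfectly_orientable (direct_prod e1 e2) -> False.
Proof.
move=> R fi gi Hf Hg H; apply: (refute_sound R); exact: embed_prod fi gi Hf Hg H.
Qed.

Lemma both3 (T1 T2 : finType) (e1 : rel T1) (e2 : rel T2) :
  simple_graph e1 -> simple_graph e2 -> connected_graph e1 -> connected_graph e2 ->
  2 < #|T1| -> 2 < #|T2| -> one_perfectly_orientable (direct_prod e1 e2) ->
  [\/ graph_iso e1 (path_graph 3) /\ graph_iso e2 (path_graph 4),
      graph_iso e2 (path_graph 3) /\ graph_iso e1 (path_graph 4)
    | graph_iso e1 (path_graph 3) /\ graph_iso e2 (path_graph 3)].
Proof.
move=> [e1s e1i] [e2s e2i] cG cH n1 n2 H.
have [o Ho] := H.
have nt1 : forall a b c, e1 a b -> e1 b c -> e1 a c -> False.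
  move=> a b c h1 h2 h3; have [f [fi Hf]] := emb_K3 e1s e1i h1 h2 h3.
  case: (tri_or_P3 e2s cH n2) => [[a' [b' [c' [k1 k2 k3]]]] | [a' [b' [c' [k1 k2 k3 k4]]]]].
    have [g [gi Hg]] := emb_K3 e2s e2i k1 k2 k3; exact: (bad ref_K3K3 fi gi Hf Hg H).
  have [g [gi Hg]] := emb_P3 e2s e2i k1 k2 k3 k4; exact: (bad ref_K3P3 fi gi Hf Hg H).
have [a1 [b1 [c1 [p1 p2 p3 p4]]]] : exists a b c, [/\ e1 a b, e1 b c, ~~ e1 a c & a != c].
  case: (tri_or_P3 e1s cG n1) => [[a [b [c [k1 k2 k3]]]] | //].
  by case: (nt1 a b c k1 k2 k3).
have [f1 [f1i Hf1]] := emb_P3 e1s e1i p1 p2 p3 p4.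
have nt2 : forall a b c, e2 a b -> e2 b c -> e2 a c -> False.
  move=> a b c h1 h2 h3; have [g [gi Hg]] := emb_K3 e2s e2i h1 h2 h3.
  exact: (bad ref_P3K3 f1i gi Hf1 Hg H).
have [a2 [b2 [c2 [q1 q2 q3 q4]]]] : exists a b c, [/\ e2 a b, e2 b c, ~~ e2 a c & a != c].
  case: (tri_or_P3 e2s cH n2) => [[a [b [c [k1 k2 k3]]]] | //].
  by case: (nt2 a b c k1 k2 k3).
have [f2 [f2i Hf2]] := emb_P3 e2s e2i q1 q2 q3 q4.
have tf1 : forall S, trifree e1 S by move=> S a b c _ _ _; exact: nt1.
have tf2 : forall S, trifree e2 S by move=> S a b c _ _ _; exact: nt2.
have le1 : #|T1| <= 4.
  rewrite leqNgt; apply/negP => c5.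
  have [S [cS HS]] := @conn_grow _ _ e1s cG 5 c5.
  have [R [cR HR]] := @conn_grow _ _ e2s cH 3 n2.
  have := key_prod (R := R) Ho (or_introl (tf1 S)); rewrite cS cR => h.
  by have := leq_trans (leq_mul HS HR) h.
have le2 : #|T2| <= 4.
  rewrite leqNgt; apply/negP => c5.
  have [S [cS HS]] := @conn_grow _ _ e1s cG 3 n1.
  have [R [cR HR]] := @conn_grow _ _ e2s cH 5 c5.
  have := key_prod (R := R) Ho (or_introl (tf1 S)); rewrite cS cR => h.
  by have := leq_trans (leq_mul HS HR) h.
have n44 : ~ (#|T1| = 4 /\ #|T2| = 4).
  case=> c41 c42.
  have [S [cS HS]] : exists S : {set T1}, #|S| = 4 /\ 2 * (4 - 1) <= PP e1 S.
    by apply: (conn_grow e1s cG); rewrite c41.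
  have [R [cR HR]] : exists R : {set T2}, #|R| = 4 /\ 2 * (4 - 1) <= PP e2 R.
    by apply: (conn_grow e2s cH); rewrite c42.
  have := key_prod (R := R) Ho (or_introl (tf1 S)); rewrite cS cR => h.
  by have := leq_trans (leq_mul HS HR) h.
have c13 : #|T1| = 3 \/ #|T1| = 4 by clear -n1 le1; lia.
have c23 : #|T2| = 3 \/ #|T2| = 4 by clear -n2 le2; lia.
case: c13 => E1.
  have iso1 := ident3 e1s e1i E1 p1 p2 p3 p4.
  case: c23 => E2.
    by apply: Or33; split => //; exact: (ident3 e2s e2i E2 q1 q2 q3 q4).
  apply: Or31; split => //.
  apply: (ident4 e2s e2i cH E2 nt2 _ _ q1 q2 q3 q4).
    by move=> f fi Hf; exact: (bad ref_P3K13 f1i fi Hf1 Hf H).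
  by move=> f fi Hf; exact: (bad ref_P3C4 f1i fi Hf1 Hf H).
case: c23 => E2; last by case: n44.
apply: Or32; split; first exact: (ident3 e2s e2i E2 q1 q2 q3 q4).
apply: (ident4 e1s e1i cG E1 nt1 _ _ p1 p2 p3 p4).
  by move=> f fi Hf; exact: (bad ref_K13P3 fi f2i Hf Hf2 H).
by move=> f fi Hf; exact: (bad ref_C4P3 fi f2i Hf Hf2 H).
Qed.

Set Implicit Arguments. Unset Strict Implicit. Unset Printing Implicit Defensive.

Lemma claim_1po (T1 T2 : finType) (e1 : rel T1) (e2 : rel T2) g :
  symmetric e1 -> (forall a b c, e1 a b -> e1 a c -> b = c) -> claim e2 g ->
  one_perfectly_orientable (direct_prod e1 e2).
Proof.
move=> e1s un [C1 C2].
exists (fun x y => e1 x.1 y.1 && (g x.2 == Some y.2)); split; [split|].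
- by move=> [a b] [c d]; rewrite /direct_prod /= => /andP[-> /eqP /C1 ->].
- move=> [a b] [c d]; rewrite /direct_prod /= => /andP[e1ac e2bd].
  by rewrite [e1 c a]e1s e1ac /=; exact: C2.
- move=> [a b] [x1 x2] [y1 y2] /= /andP[ea1 /eqP g1] /andP[ea2 /eqP g2] xy.
  have E1 := un _ _ _ ea1 ea2; rewrite g1 in g2; case: g2 => E2.
  by rewrite E1 E2 eqxx in xy.
Qed.

Lemma P2_un (T : finType) (e : rel T) : graph_iso e (path_graph 2) ->
  forall a b c, e a b -> e a c -> b = c.
Proof.
case=> f [fb Hf] a b c; rewrite -!Hf => h1 h2; apply: (bij_inj fb).
move: (f a) (f b) (f c) h1 h2.
by move=> [[|[|?]] ?] [[|[|?]] ?] [[|[|?]] ?] //= _ _; apply: ord_inj.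
Qed.

Lemma iso_1po (T1 T2 A B : finType) (e1 : rel T1) (e2 : rel T2) (eA : rel A) (eB : rel B) :
  graph_iso e1 eA -> graph_iso e2 eB -> one_perfectly_orientable (direct_prod eA eB) ->
  one_perfectly_orientable (direct_prod e1 e2).
Proof.
case=> f [fb Hf]; case=> g [gb Hg].
exact: (embed_prod (bij_inj fb) (bij_inj gb) Hf Hg).
Qed.

Lemma K2_pseudo_1po (T1 T2 : finType) (e1 : rel T1) (e2 : rel T2) :
  simple_graph e1 -> simple_graph e2 -> graph_iso e1 (path_graph 2) -> pseudotree e2 ->
  one_perfectly_orientable (direct_prod e1 e2).
Proof.
move=> [e1s e1i] [e2s e2i] i1 p2.
have [g Hg] := pseudo_claim e2s e2i p2.
exact: (claim_1po e1s (P2_un i1) Hg).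
Qed.

Unset Implicit Arguments.

Theorem proposition10 (T1 T2 : finType) (e1 : rel T1) (e2 : rel T2)
  (hG : simple_graph e1) (hH : simple_graph e2)
  (cG : connected_graph e1) (cH : connected_graph e2)
  (nG : 1 < #|T1|) (nH : 1 < #|T2|) :
  one_perfectly_orientable (direct_prod e1 e2) <->
  [\/ (graph_iso e1 (path_graph 2) /\ pseudotree e2)
      \/ (graph_iso e2 (path_graph 2) /\ pseudotree e1),
      (graph_iso e1 (path_graph 3) /\ graph_iso e2 (path_graph 4))
      \/ (graph_iso e2 (path_graph 3) /\ graph_iso e1 (path_graph 4))
    | graph_iso e1 (path_graph 3) /\ graph_iso e2 (path_graph 3)].
Proof.
split.
- move=> H.
  case: (eqVneq #|T1| 2) => c1.
    by apply: Or31; left; exact: (K2_case hG hH cG cH c1 H).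
  case: (eqVneq #|T2| 2) => c2.
    by apply: Or31; right; exact: (K2_case hH hG cH cG c2 (swap_1po H)).
  have n1 : 2 < #|T1| by rewrite ltn_neqAle eq_sym c1 nG.
  have n2 : 2 < #|T2| by rewrite ltn_neqAle eq_sym c2 nH.
  case: (both3 hG hH cG cH n1 n2 H) => h.
  + by apply: Or32; left.
  + by apply: Or32; right.
  + by apply: Or33.
- case=> [[[i1 p2]|[i2 p1]] | [[i1 i2]|[i2 i1]] | [i1 i2]].
  + exact: (K2_pseudo_1po hG hH i1 p2).
  + exact: (swap_1po (K2_pseudo_1po hH hG i2 p1)).
  + exact: (iso_1po i1 i2 opo34).
  + exact: (iso_1po i1 i2 opo43).
  + exact: (iso_1po i1 i2 opo33).
Qed.
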